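(* For all integers $n_1\ge 3$ and $n_2\ge 3$, $\lambda_3(P_{n_1}\circ P_{n_2})=n_2+1$, where $P_n$ denotes the path on $n$ vertices.
   Context: For a graph $G$ and $S\subseteq V(G)$ with $|S|\ge 2$, an $S$-tree is a subgraph of $G$ that is a tree containing all vertices of $S$; $\lambda(S)$ is the maximum number of pairwise edge-disjoint $S$-trees in $G$, and $\lambda_3(G)=\min\{\lambda(S): S\subseteq V(G),\ |S|=3\}$. The lexicographic product $G\circ H$ has vertex set $V(G)\times V(H)$, and $(u,v)$ is adjacent to $(u',v')$ iff either $uu'\in E(G)$, or $u=u'$ and $vv'\in E(H)$. *)

(* Defs.v *)
From mathcomp Require Import all_boot.
Set Implicit Arguments. Unset Strict Implicit. Unset Printing Implicit Defensive.

Section Graphs.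
Variable T : finType.
Variable adj : rel T.

(* A subgraph H = (VH, EH): VH a vertex set, EH a set of edges, each edge an
   unordered pair {x,y} represented by the 2-element set [set x; y]. *)
Definition subgraph (VH : {set T}) (EH : {set {set T}}) : Prop :=
  forall e, e \in EH ->
    exists x y, [/\ e = [set x; y], x != y, adj x y, x \in VH & y \in VH].

Definition hadj (EH : {set {set T}}) : rel T :=
  fun x y => (x != y) && ([set x; y] \in EH).

Definition h_connected (VH : {set T}) (EH : {set {set T}}) : Prop :=
  forall x y, x \in VH -> y \in VH -> connect (hadj EH) x y.

Definition h_acyclic (EH : {set {set T}}) : Prop :=
  ~ exists c : seq T, [/\ uniq c, 3 <= size c & cycle (hadj EH) c].

Definition is_tree (VH : {set T}) (EH : {set {set T}}) : Prop :=
  [/\ subgraph VH EH, VH != set0, h_connected VH EH & h_acyclic EH].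

Definition S_tree (S : {set T}) (H : {set T} * {set {set T}}) : Prop :=
  is_tree H.1 H.2 /\ S \subset H.1.

Definition has_disjoint_S_trees (S : {set T}) (k : nat) : Prop :=
  exists F : 'I_k -> {set T} * {set {set T}},
    (forall i, S_tree S (F i)) /\
    (forall i j, i != j -> [disjoint (F i).2 & (F j).2]).

Definition lambda_is (S : {set T}) (k : nat) : Prop :=
  has_disjoint_S_trees S k /\ forall k', has_disjoint_S_trees S k' -> k' <= k.

Definition lambda3_is (m : nat) : Prop :=
  (exists S : {set T}, #|S| = 3 /\ lambda_is S m) /\
  (forall (S : {set T}) k, #|S| = 3 -> lambda_is S k -> m <= k).

End Graphs.

Definition path_adj (n : nat) : rel 'I_n :=
  fun i j => (i.+1 == j :> nat) || (j.+1 == i :> nat).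
Arguments path_adj : clear implicits.

Definition lex_adj (A B : finType) (adjG : rel A) (adjH : rel B) : rel (A * B) :=
  fun p q => adjG p.1 q.1 || ((p.1 == q.1) && adjH p.2 q.2).

(* Main.v *)
Require Import Defs.
From mathcomp Require Import all_boot zify.
From Stdlib Require Import ClassicalEpsilon.
Set Implicit Arguments. Unset Strict Implicit. Unset Printing Implicit Defensive.

Section Gen.
Variable T : finType.

Lemma set2_eqP (a b c d : T) : [set a; b] = [set c; d] ->
  (a = c /\ b = d) \/ (a = d /\ b = c).
Proof.
move=> E.
have ha : a \in [set c; d] by rewrite -E set21.
have hb : b \in [set c; d] by rewrite -E set22.
have hc : c \in [set a; b] by rewrite E set21.
have hd : d \in [set a; b] by rewrite E set22.
move: ha hb hc hd => /set2P[] Ha /set2P[] Hb /set2P[] Hc /set2P[] Hd; subst; by intuition.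
Qed.

Lemma hadj_sym (E : {set {set T}}) : symmetric (hadj E).
Proof. by move=> x y; rewrite /hadj eq_sym setUC. Qed.

Lemma conn_restr (R R' : rel T) z :
  (forall a b, connect R z a -> R a b -> connect R' a b) ->
  forall v, connect R z v -> connect R' z v.
Proof.
move=> H v /connectP [p Hp ->].
suff: forall a, connect R z a -> connect R' z a -> path R a p ->
  connect R' z (last a p) by move=> /(_ z); apply=> //; apply: connect0.
clear Hp; elim: p => [|b p IH] a c1 c2 /=; first by [].
case/andP => Rab Hp; apply: IH Hp.
  by apply: connect_trans c1 (connect1 Rab).
by apply: connect_trans c2 (H _ _ c1 Rab).
Qed.

Lemma prune (adj : rel T) (E : {set {set T}}) (S : {set T}) (z : T) :
  (forall e, e \in E -> exists x y, [/\ e = [set x; y], x != y & adj x y]) ->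
  (forall s, s \in S -> connect (hadj E) z s) ->
  exists H, S_tree adj S H /\ H.2 \subset E.
Proof.
move=> HE HS.
pose P (F : {set {set T}}) := (F \subset E) && [forall s in S, connect (hadj F) z s].
have PE : P E by rewrite /P subxx /=; apply/forall_inP.
have ex : exists n, [exists F, P F && (#|F| == n)].
  by exists #|E|; apply/existsP; exists E; rewrite PE eqxx.
case: (ex_minnP ex) => n /existsP [F /andP [PF /eqP cF]] minF.
have keyF : forall e, e \in F -> ~~ P (F :\ e).
  move=> e eF; apply/negP => Pe.
  have := minF #|F :\ e|; rewrite (cardsD1 e F) eF in cF.
  have -> : [exists F0, P F0 && (#|F0| == #|F :\ e|)].
    by apply/existsP; exists (F :\ e); rewrite Pe eqxx.
  by move/(_ isT); rewrite -cF ltnn.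
case/andP: PF => sFE /forall_inP PFS.
have sFDE : forall e, F :\ e \subset E.
  by move=> e; apply: subset_trans sFE; apply: subsetDl.
have csym := sym_connect_sym (hadj_sym F).
pose VH := [set v | connect (hadj F) z v].
exists (VH, F); split; last by [].
split; last by apply/subsetP => s hs; rewrite inE; apply: PFS.
split.
- move=> e eF; have [x [y [exy nxy axy]]] := HE e (subsetP sFE e eF).
  have hxy : hadj F x y by rewrite /hadj nxy -exy eF.
  have hyx : hadj F y x by rewrite hadj_sym.
  have xV : x \in VH.
    apply/negPn/negP => nx.
    have ny : y \notin VH.
      apply/negP; rewrite !inE => cy; move: nx; rewrite inE.
      by rewrite (connect_trans cy (connect1 hyx)).
    apply: (negP (keyF e eF)); rewrite /P sFDE /=; apply/forall_inP => s hs.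
    apply: (conn_restr (R := hadj F)) (PFS s hs) => a b za hab.
    apply: connect1; move: hab; rewrite /hadj !inE => /andP [-> ->]; rewrite andbT.
    apply/eqP; rewrite exy => /set2_eqP [[ax _]|[ay _]]; subst.
    + by move: nx; rewrite inE za.
    + by move: ny; rewrite inE za.
  exists x, y; split => //.
  by move: xV; rewrite !inE => cx; apply: connect_trans cx (connect1 hxy).
- by apply/set0Pn; exists z; rewrite inE connect0.
- move=> x y; rewrite !inE => cx cy.
  by apply: connect_trans cy; rewrite csym.
- case=> c [uc sc cc].
  case: c uc sc cc => [|c0 [|c1 rest]] //= uc sc.
  rewrite rcons_path => /andP [h01 /andP [prest hlast]].
  have eF : [set c0; c1] \in F by case/andP: h01.
  apply: (negP (keyF _ eF)); rewrite /P sFDE /=; apply/forall_inP => s hs.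
  move: uc => /andP [nc0 /andP [nc1 urest]].
  rewrite inE negb_or in nc0; case/andP: nc0 => n01 n0rest.
  have hsub : {in predC1 c0 &, subrel (hadj F) (hadj (F :\ [set c0; c1]))}.
    move=> a b /= ha hb; rewrite /hadj !inE => /andP [-> ->]; rewrite andbT.
    apply/eqP => /set2_eqP [[ax _]|[_ bx]].
    + by move: ha; rewrite ax !inE eqxx.
    + by move: hb; rewrite bx !inE eqxx.
  have p1 : path (hadj (F :\ [set c0; c1])) c1 rest.
    apply: (sub_in_path hsub) prest; apply/allP => w /= hw.
    by apply/eqP => ew; subst w; move: hw; rewrite inE (negbTE n01) /= (negbTE n0rest).
  have p2 : hadj (F :\ [set c0; c1]) (last c1 rest) c0.
    move: hlast; rewrite /hadj !inE => /andP [-> ->]; rewrite andbT.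
    apply/eqP => /set2_eqP [[lx _]|[lx _]].
    + have := mem_last c1 rest; rewrite lx inE (negbTE n0rest) orbF => /eqP e0.
      by rewrite e0 eqxx in n01.
    + case: rest sc n0rest nc1 urest prest p1 lx => [|r0 rest'] //= _ _ nc1 _ _ _ lx.
      by move: nc1; rewrite -lx mem_last.
  have c10 : connect (hadj (F :\ [set c0; c1])) c1 c0.
    by apply/connectP; exists (rcons rest c0); rewrite ?rcons_path ?p1 ?p2 ?last_rcons.
  have c01 : connect (hadj (F :\ [set c0; c1])) c0 c1.
    by rewrite (sym_connect_sym (hadj_sym _)).
  apply: (conn_restr (R := hadj F)) (PFS s hs) => a b _ hab.
  case: (boolP ([set a; b] == [set c0; c1])) => [/eqP /set2_eqP [[-> ->]|[-> ->]] //|ne].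
  apply: connect1; move: hab; rewrite /hadj !inE => /andP [-> ->].
  by rewrite ne.
Qed.

Lemma upper (adj : rel T) (S : {set T}) k (c0 w : T) (N : {set T}) :
  symmetric adj -> c0 \in S -> w \in S -> c0 != w ->
  (forall u, adj c0 u -> u \in N) ->
  has_disjoint_S_trees adj S k -> k <= #|N|.
Proof.
move=> asym c0S wS nw HN [F [HF Hdis]].
pose g i : T := odflt c0 [pick u | hadj (F i).2 c0 u].
have hg : forall i, hadj (F i).2 c0 (g i).
  move=> i; rewrite /g; case: pickP => [u //|none].
  have [[sub _ conn _] sS] := HF i.
  have := conn c0 w (subsetP sS _ c0S) (subsetP sS _ wS).
  case/connectP => [[|u p]] /=; first by move=> _ ew; rewrite ew eqxx in nw.
  by case/andP=> h _ _; have := none u; rewrite h.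
have gin : forall i, [set c0; g i] \in (F i).2 by move=> i; case/andP: (hg i).
have adjg : forall i, adj c0 (g i).
  move=> i; have [[sub _ _ _] _] := HF i.
  have [x [y [exy _ axy _ _]]] := sub _ (gin i).
  by case/set2_eqP: exy => [[-> ->]|[-> ->]] //; rewrite asym.
have ginj : injective g.
  move=> i j eij; apply/eqP; apply/negPn/negP => nij.
  have := disjointFr (Hdis i j nij) (gin i); by rewrite eij gin.
have : #|g @: 'I_k| <= #|N|.
  by apply: subset_leq_card; apply/subsetP => u /imsetP [i _ ->]; apply: HN.
by rewrite card_imset // card_ord.
Qed.
End Gen.

Lemma ord_up n (P : 'I_n -> Prop) (i0 i1 : 'I_n) : i0 <= i1 -> P i0 ->
  (forall k k' : 'I_n, k.+1 = k' :> nat -> i0 <= k -> k' <= i1 -> P k -> P k') ->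
  P i1.
Proof.
move=> le P0 step.
suff: forall d (k : 'I_n), k = i0 + d :> nat -> k <= i1 -> P k.
  by move=> /(_ (i1 - i0) i1); apply; lia.
elim=> [|d IH] k ek lek.
  by have -> : k = i0 by apply: val_inj; rewrite /= ek addn0.
have hk : i0 + d < n by have := ltn_ord k; lia.
apply: (step (Ordinal hk)) => //=; try lia.
by apply: IH => /=; lia.
Qed.

Lemma conn_ord n (T : finType) (R : rel T) (f : 'I_n -> T) :
  symmetric R ->
  (forall k k' : 'I_n, k.+1 = k' :> nat -> R (f k) (f k')) ->
  forall j j' : 'I_n, connect R (f j) (f j').
Proof.
move=> Rs H.
have up : forall j j' : 'I_n, j <= j' -> connect R (f j) (f j').
  move=> j j' le.
  apply: (ord_up (P := fun k => connect R (f j) (f k))) le (connect0 _ _) _.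
  by move=> k k' e _ _ c; apply: connect_trans c (connect1 (H _ _ e)).
move=> j j'; case: (leqP j j') => [le|lt]; first exact: up.
by rewrite (sym_connect_sym Rs); apply: up; apply: ltnW.
Qed.

Lemma choose_g (n cx cy cz : nat) : 3 <= n -> cx < n -> cy < n -> cz < n ->
  exists g, g.+1 < n /\
   ((cx <= g \/ cy <= g \/ cz <= g) -> (g < cx \/ g < cy \/ g < cz) ->
    (~(cx = g /\ cy = g) /\ ~(cx = g /\ cz = g) /\ ~(cy = g /\ cz = g)) /\
    (~(cx = g.+1 /\ cy = g.+1) /\ ~(cx = g.+1 /\ cz = g.+1) /\
        ~(cy = g.+1 /\ cz = g.+1))).
Proof.
move=> hn hx hy hz.
case: (boolP ((0 < cx) && (0 < cy) && (0 < cz))) => [/andP [/andP [ax ay] az]|nA].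
  exists (minn cx (minn cy cz)).-1; split; first lia.
  move=> H1 H2; exfalso; lia.
case: (boolP ((cx < n.-1) && (cy < n.-1) && (cz < n.-1))) => [/andP [/andP [ax ay] az]|nB].
  exists (maxn cx (maxn cy cz)); split; first lia.
  move=> H1 H2; exfalso; lia.
case: (boolP [|| (cx == 0) && (cy == 0), (cx == 0) && (cz == 0) | (cy == 0) && (cz == 0)]) => h2z.
  exists (n - 2); split; first lia.
  move=> H1 H2; move: nA nB h2z; rewrite !negb_and -!leqNgt; lia.
exists 0; split; first lia.
move=> H1 H2; move: nA nB h2z; rewrite !negb_and -!leqNgt; lia.
Qed.

Section Main.
Variables n1 n2 : nat.
Hypothesis Hn1 : 3 <= n1.
Hypothesis Hn2 : 3 <= n2.
Local Notation V := ('I_n1 * 'I_n2)%type.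
Local Notation adjV := (lex_adj (path_adj n1) (path_adj n2)).

Section Constr.
Variables (S : {set V}) (g : nat) (a b : 'I_n2).

Definition sw (j : 'I_n2) : 'I_n2 := if j == a then b else if j == b then a else j.
Definition rho (i : nat) j := if i <= g then j else sw j.
Definition sig (i : nat) j := if i == g then sw j else j.

Lemma swK j : sw (sw j) = j.
Proof.
rewrite /sw; case: (eqVneq j a) => [->|nja]; first by rewrite eqxx; case: eqVneq.
case: (eqVneq j b) => [->|njb]; first by rewrite eqxx.
by rewrite (negbTE nja) (negbTE njb).
Qed.

Lemma sw_inj : injective sw.
Proof. exact: can_inj swK. Qed.

Lemma rhoK i j : rho i (rho i j) = j.
Proof. by rewrite /rho; case: leqP => // _; rewrite swK. Qed.

Lemma sig_rho i j : sig i (rho i j) = rho i.+1 j.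
Proof.
rewrite /sig /rho.
case: (boolP (i < g)) => h1; [|case: (boolP (i == g)) => h2].
- have e1 : (i == g) = false by lia.
  have e2 : (i <= g) = true by lia.
  by rewrite ?e1 ?e2.
- have e2 : (i <= g) = true by lia.
  have e3 : (i.+1 <= g) = false by lia.
  by rewrite ?e2 ?e3.
- have e2 : (i <= g) = false by lia.
  have e3 : (i.+1 <= g) = false by lia.
  by rewrite ?e2 ?e3.
Qed.

Lemma sig_inj i : injective (sig i).
Proof. by rewrite /sig; case: eqP => _ //; apply: sw_inj. Qed.

Definition labX (u v : V) : nat :=
  if v.2 == sig u.1 u.2 then (rho u.1 u.2 : nat)
  else if (u \in S) && (u.1 <= g) then (rho v.1 v.2 : nat)
  else if (v \in S) && (g < v.1) then (rho u.1 u.2 : nat)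
  else n2.

Definition lab (u v : V) : option nat :=
  if u.1.+1 == v.1 then Some (labX u v)
  else if v.1.+1 == u.1 then Some (labX v u)
  else if (u.1 == v.1) && ((u.2.+1 == v.2) || (v.2.+1 == u.2)) then Some n2
  else None.

Lemma lab_sym u v : lab u v = lab v u.
Proof.
rewrite /lab; case: (eqVneq (u.1.+1 : nat) v.1) => e1.
  by have -> : (v.1.+1 == u.1) = false by lia.
case: (eqVneq (v.1.+1 : nat) u.1) => e2 //=.
by rewrite eq_sym orbC.
Qed.

Lemma lab_adj u v k : lab u v = Some k -> u != v /\ adjV u v.
Proof.
rewrite /lab.
case: (eqVneq (u.1.+1 : nat) v.1) => e1.
  move=> _; split; first by apply/eqP => e; move: e1; rewrite e; lia.
  by rewrite /lex_adj /path_adj e1 eqxx.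
case: (eqVneq (v.1.+1 : nat) u.1) => e2.
  move=> _; split; first by apply/eqP => e; move: e2; rewrite e; lia.
  by rewrite /lex_adj /path_adj e2 eqxx orbT.
case: andP => // [[/eqP e3 e4]] _; split.
  by apply/eqP => e; move: e4; rewrite e; lia.
by rewrite /lex_adj /path_adj e3 eqxx e4 orbT.
Qed.

Definition E (k : nat) : {set {set V}} :=
  [set [set p.1; p.2] | p in [set p : V * V | lab p.1 p.2 == Some k]].

Lemma E_mem u v k : lab u v = Some k -> hadj (E k) u v.
Proof.
move=> h; have [nuv _] := lab_adj h.
rewrite /hadj nuv /=; apply/imsetP; exists (u, v) => //.
by rewrite inE h.
Qed.

Lemma E_edges k e : e \in E k ->
  exists x y, [/\ e = [set x; y], x != y & adjV x y].
Proof.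
case/imsetP => p; rewrite inE => /eqP h ->.
by have [n a'] := lab_adj h; exists p.1, p.2.
Qed.

Lemma E_disj k k' : k != k' -> [disjoint E k & E k'].
Proof.
move=> nk; apply/pred0P => e /=; apply/negP => /andP [].
case/imsetP => p; rewrite inE => /eqP hp ->.
case/imsetP => q; rewrite inE => /eqP hq /set2_eqP H.
have : lab p.1 p.2 = lab q.1 q.2.
  by case: H => [[-> ->]|[-> ->]]; rewrite // lab_sym.
by rewrite hp hq => -[] /eqP; rewrite (negbTE nk).
Qed.


Lemma lab_right (u v : V) : u.1.+1 = v.1 :> nat -> lab u v = Some (labX u v).
Proof. by rewrite /lab => ->; rewrite eqxx. Qed.

Lemma avoid2 (p q : 'I_n2) : exists c : 'I_n2, c != p /\ c != q.
Proof.
have h0 : 0 < n2 by lia.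
have h1' : 1 < n2 by lia.
have h2' : 2 < n2 by lia.
case: (boolP ((val p != 0) && (val q != 0))) => [/andP [hp hq]|n0].
  by exists (Ordinal h0); rewrite -!val_eqE /= eq_sym hp eq_sym hq.
case: (boolP ((val p != 1) && (val q != 1))) => [/andP [hp hq]|n1'].
  by exists (Ordinal h1'); rewrite -!val_eqE /= eq_sym hp eq_sym hq.
exists (Ordinal h2'); split; apply/eqP => e; move: n0 n1'; by rewrite -e /= ?andbT !negbK => /eqP ->.
Qed.

Hypothesis HS3 : #|S| = 3.

Lemma avoidS (w : V) (i : 'I_n1) : w \in S -> w.1 != i -> exists j, (i, j) \notin S.
Proof.
move=> wS wi.
case: (boolP [exists j, (i, j) \notin S]) => [/existsP //|/existsPn hall].
have inj : injective (fun j : 'I_n2 => (i, j)) by move=> j j' [].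
have sub : w |: [set (i, j) | j in 'I_n2] \subset S.
  apply/subsetP => u; rewrite in_setU1 => /orP [/eqP -> //|/imsetP [j _ ->]].
  by have := hall j; rewrite negbK.
have := subset_leq_card sub; rewrite cardsU1 card_imset // card_ord HS3.
have -> : w \notin [set (i, j) | j in 'I_n2].
  by apply/imsetP => -[j _ ew]; rewrite ew eqxx in wi.
move=> /=; lia.
Qed.

Definition uniqcol (c : nat) := forall u u' : V, u \in S -> u' \in S ->
  u.1 = c :> nat -> u'.1 = c :> nat -> u = u'.

Definition spanned (i : nat) := (exists2 x : V, x \in S & x.1 <= i) /\
                                (exists2 y : V, y \in S & i < y.1).

Lemma col_row c : uniqcol c -> exists r0 : 'I_n2,
  forall u : V, u \in S -> u.1 = c :> nat -> u.2 = r0.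
Proof.
move=> U.
case: (pickP [pred u : V | (u \in S) && (u.1 == c :> nat)]) => [u0 /andP [u0S /eqP u0c]|none].
  by exists u0.2 => u uS uc; rewrite (U u u0).
by exists a => u uS uc; have := none u; rewrite /= uS uc eqxx.
Qed.

Hypothesis Hcol : spanned g -> uniqcol g /\ uniqcol g.+1.

Lemma conn_gap (i k : 'I_n1) : i.+1 = k :> nat -> spanned i ->
  exists j j', lab (i, j) (k, j') = Some n2.
Proof.
move=> ik sp; case: (sp) => [[x xS xi] [y yS iy]].
suff: exists j j', labX (i, j) (k, j') = n2.
  by case=> j [j' e]; exists j, j'; rewrite lab_right ?e.
rewrite /labX /sig /rho /=.
case: (ltngtP i g) => ig.
- have hy : y.1 != i by rewrite -val_eqE /=; lia.
  have [j hj] := avoidS yS hy.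
  have [j' [hj' _]] := avoid2 j j.
  exists j, j'; rewrite (negbTE hj') (negbTE hj) /=.
  have -> : (g < k) = false by lia.
  by rewrite andbF.
- have hx : x.1 != k by rewrite -val_eqE /=; lia.
  have [j' hj'] := avoidS xS hx.
  have [j [hj _]] := avoid2 j' j'.
  by exists j, j'; rewrite eq_sym (negbTE hj) (negbTE hj') /= andbF.
- have [U0 U1] : uniqcol g /\ uniqcol g.+1 by apply: Hcol; rewrite -ig.
  have [r0 Hr0] := col_row U0; have [r1 Hr1] := col_row U1.
  have [j [hj _]] := avoid2 r0 r0.
  have [j' [hj'1 hj'2]] := avoid2 r1 (sw j).
  exists j, j'; rewrite (negbTE hj'2).
  have -> : ((i, j) \in S) = false.
    by apply/negP => jS; have := Hr0 _ jS; rewrite /= ig => /(_ erefl) ej; rewrite ej eqxx in hj.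
  have -> : ((k, j') \in S) = false.
    apply/negP => jS; have := Hr1 _ jS; rewrite /= -ik ig => /(_ erefl) ej.
    by rewrite ej eqxx in hj'1.
  by [].
Qed.


Lemma lab_vert (u v : V) : u.1 = v.1 -> u.2.+1 = v.2 :> nat -> lab u v = Some n2.
Proof.
move=> e1 e2; rewrite /lab e1.
have -> : (v.1.+1 == v.1 :> nat) = false by lia.
by rewrite e2 !eqxx.
Qed.

Lemma vert_conn (i : 'I_n1) (j j' : 'I_n2) : connect (hadj (E n2)) (i, j) (i, j').
Proof.
apply: (conn_ord (f := fun j : 'I_n2 => (i, j))) => [|k k' e]; first exact: hadj_sym.
by apply: E_mem; apply: lab_vert.
Qed.

Lemma extra_conn : exists z, forall s, s \in S -> connect (hadj (E n2)) z s.
Proof.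
have /set0Pn [x1 x1S] : S != set0 by rewrite -card_gt0 HS3.
case: (arg_minnP (fun x : V => nat_of_ord x.1) x1S) => x0 x0S x0min.
exists x0 => s sS.
have key : forall k : 'I_n1, x0.1 <= k -> k <= s.1 ->
    forall j, connect (hadj (E n2)) x0 (k, j).
  move=> k le1 le2.
  apply: (ord_up (P := fun k => forall j, connect (hadj (E n2)) x0 (k, j))) le1 _ _.
    by case: (x0) => c r j; apply: vert_conn.
  move=> k0 k' e le0 le' Pk j.
  have sp : spanned k0.
    split; first by exists x0.
    by exists s => //; rewrite -e in le'; exact: leq_trans le' le2.
  have [j0 [j1 hl]] := conn_gap e sp.
  apply: connect_trans (Pk j0) _.
  apply: connect_trans (connect1 (E_mem hl)) _.
  exact: vert_conn.
have := key s.1 (x0min s sS) (leqnn _) s.2.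
by rewrite -surjective_pairing.
Qed.

Hypothesis Hg : g.+1 < n1.
Hypothesis Hfac : forall u v : V, u \in S -> v \in S ->
  u.1 = g :> nat -> v.1 = g.+1 :> nat -> sw u.2 = v.2.

Lemma spine_conn (t : 'I_n2) (i i' : 'I_n1) :
  connect (hadj (E t)) (i, rho i t) (i', rho i' t).
Proof.
apply: (conn_ord (f := fun i : 'I_n1 => (i, rho i t))) => [|k k' e].
  exact: hadj_sym.
apply: E_mem; rewrite lab_right //; congr Some.
by rewrite /labX sig_rho e eqxx rhoK.
Qed.

Lemma tree_conn (t : 'I_n2) (i0 : 'I_n1) (s : V) :
  s \in S -> connect (hadj (E t)) (i0, rho i0 t) s.
Proof.
case: s => c r sS.
case: (eqVneq r (rho c t)) => [->|nr]; first exact: spine_conn.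
case: (leqP c g) => cg.
- have hk : c.+1 < n1 by lia.
  apply: connect_trans (spine_conn t i0 (Ordinal hk)) _.
  apply: connect1; rewrite hadj_sym; apply: E_mem.
  rewrite lab_right //; congr Some; rewrite /labX /=.
  have -> : (rho c.+1 t == sig c r) = false.
    apply/negP => /eqP; rewrite -sig_rho => /sig_inj h.
    by rewrite h eqxx in nr.
  by rewrite sS cg /= rhoK.
- have hk : c.-1 < n1 by have := ltn_ord c; lia.
  have kc : (Ordinal hk).+1 = c :> nat by rewrite /=; lia.
  apply: connect_trans (spine_conn t i0 (Ordinal hk)) _.
  apply: connect1; apply: E_mem.
  rewrite lab_right //; congr Some; rewrite /labX.
  rewrite sig_rho kc (negbTE nr).
  have -> : ((Ordinal hk, rho (Ordinal hk) t) \in S) && (Ordinal hk <= g) = false.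
    apply/negP => /andP [kS kg].
    have kg' : (Ordinal hk : nat) = g by move: kg cg; rewrite /=; lia.
    have cg1 : (c : nat) = g.+1 by move: kc; rewrite kg'.
    have := Hfac kS sS kg' cg1.
    rewrite /= /rho.
    have -> : (c.-1 <= g) = true by lia.
    move=> e; move: nr; rewrite /rho -e.
    have -> : (c <= g) = false by lia.
    by rewrite eqxx.
  by rewrite /= sS cg rhoK.
Qed.


Lemma lower_trees : has_disjoint_S_trees adjV S n2.+1.
Proof.
have ex : forall k : 'I_n2.+1, exists H, S_tree adjV S H /\ H.2 \subset E k.
  move=> k; case: (ltnP k n2) => kn.
  - have l0 : 0 < n1 by lia.
    pose t := Ordinal kn; pose i0 := Ordinal l0.
    apply: (prune (z := (i0, rho i0 t))); first exact: E_edges.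
    by move=> s sS; apply: tree_conn.
  - have ek : (k : nat) = n2 by have := ltn_ord k; lia.
    rewrite ek; case: extra_conn => z hz.
    by apply: (prune (z := z)); first exact: E_edges.
pose F k := proj1_sig (constructive_indefinite_description _ (ex k)).
exists F; split.
  by move=> i; exact: (proj2_sig (constructive_indefinite_description _ (ex i))).1.
move=> i j nij.
have si := (proj2_sig (constructive_indefinite_description _ (ex i))).2.
have sj := (proj2_sig (constructive_indefinite_description _ (ex j))).2.
apply: (disjointW si sj); apply: E_disj.
by rewrite -val_eqE in nij.
Qed.

End Constr.

Lemma uniq3 (x y z : V) (c : nat) :
  ~(x.1 = c :> nat /\ y.1 = c :> nat) -> ~(x.1 = c :> nat /\ z.1 = c :> nat) ->
  ~(y.1 = c :> nat /\ z.1 = c :> nat) -> uniqcol [set x; y; z] c.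
Proof.
move=> H1 H2 H3 u u'; rewrite !inE -!orbA => /or3P [] /eqP -> /or3P [] /eqP -> // e1 e2;
  exfalso; lia.
Qed.

Lemma lower (S : {set V}) : #|S| = 3 -> has_disjoint_S_trees adjV S n2.+1.
Proof.
move=> HS3.
have /set0Pn [x xS] : S != set0 by rewrite -card_gt0 HS3.
have /cards2P [y [z [nyz eSx]]] : #|S :\ x| == 2.
  by apply/eqP; move: HS3; rewrite (cardsD1 x) xS /=; lia.
have eS : S = [set x; y; z].
  apply/setP => u; move/setP: (eSx) => /(_ u); rewrite !inE.
  by case: (eqVneq u x) => [->|nux] /=; [rewrite xS | move=> ->].
have [g [Hg Hsp]] := choose_g Hn1 (ltn_ord x.1) (ltn_ord y.1) (ltn_ord z.1).
have Hcol : spanned S g -> uniqcol S g /\ uniqcol S g.+1.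
  case=> [[u uS ug] [v vS gv]].
  have hu : x.1 <= g \/ y.1 <= g \/ z.1 <= g.
    by move: uS ug; rewrite eS !inE -!orbA => /or3P [] /eqP -> ?; tauto.
  have hv : g < x.1 \/ g < y.1 \/ g < z.1.
    by move: vS gv; rewrite eS !inE -!orbA => /or3P [] /eqP -> ?; tauto.
  have [[A1 [A2 A3]] [B1 [B2 B3]]] := Hsp hu hv.
  by rewrite eS; split; apply: uniq3.
case: (pickP [pred p : V * V | [&& p.1 \in S, p.2 \in S, p.1.1 == g :> nat &
    p.2.1 == g.+1 :> nat]]) => [p /and4P [p1S p2S /eqP p1g /eqP p2g]|none].
- apply: (lower_trees (a := p.1.2) (b := p.2.2) HS3 Hcol Hg).
  move=> u v uS vS ug vg.
  have sp : spanned S g by split; [exists u => //; rewrite ug | exists v => //; rewrite vg].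
  have [U0 U1] := Hcol sp.
  rewrite (U0 u p.1) // (U1 v p.2) //.
  by rewrite /sw eqxx.
- apply: (lower_trees (a := x.2) (b := x.2) HS3 Hcol Hg).
  move=> u v uS vS ug vg.
  by have := none (u, v); rewrite /= uS vS ug vg !eqxx.
Qed.


Lemma adjV_sym : symmetric adjV.
Proof.
move=> u v; rewrite /lex_adj /path_adj.
by rewrite (orbC (u.1.+1 == v.1)) (eq_sym u.1) (orbC (u.2.+1 == v.2)).
Qed.

Lemma final : lambda3_is adjV n2.+1.
Proof.
have l0 : 0 < n1 by lia.
have l1 : 1 < n1 by lia.
have m0 : 0 < n2 by lia.
have m1 : 1 < n2 by lia.
have m2 : 2 < n2 by lia.
pose z0 := Ordinal l0; pose z1 := Ordinal l1.
pose o0 := Ordinal m0; pose o1 := Ordinal m1; pose o2 := Ordinal m2.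
pose S0 : {set V} := (z0, o0) |: ((z0, o1) |: [set (z0, o2)]).
have cS0 : #|S0| = 3.
  rewrite /S0 !cardsU1 cards1 !inE !xpair_eqE -!val_eqE /=.
  by [].
split; last by move=> S k HS [hk hmax]; apply: hmax; apply: lower.
exists S0; split => //; split; first exact: lower.
move=> k' hk'.
pose N : {set V} := (z0, o1) |: [set (z1, j) | j in 'I_n2].
have cN : #|N| <= n2.+1.
  rewrite cardsU1 card_imset ?card_ord; last by move=> j j' [].
  by case: (_ \notin _).
apply: leq_trans cN.
apply: (upper (c0 := (z0, o0)) (w := (z0, o1)) _ _ _ _ _ hk').
- exact: adjV_sym.
- by rewrite !inE eqxx.
- by rewrite !inE eqxx orbT.
- by rewrite !xpair_eqE -!val_eqE.
- case=> i j; rewrite /lex_adj /path_adj /= => h; rewrite in_setU1.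
  case/orP: h => [/orP [/eqP hi | //] | /andP [/eqP hi /orP [/eqP hj | //]]].
  + apply/orP; right; apply/imsetP; exists j => //.
    by congr pair; apply: val_inj; rewrite /= hi.
  + apply/orP; left; apply/eqP; congr pair => //.
    by apply: val_inj; rewrite /= hj.
Qed.

End Main.

Unset Implicit Arguments.
Theorem corollary3p5 (n1 n2 : nat) :
  3 <= n1 -> 3 <= n2 ->
  lambda3_is (lex_adj (path_adj n1) (path_adj n2)) n2.+1.
Proof. by move=> h1 h2; apply: final. Qed.
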